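(* For real $m>0$ let $\lambda_{1,m}=m^2+\gamma_{1,m}^2$, where $\gamma_{1,m}$ is the unique $\gamma\in\left(\frac{\pi}{2},\pi\right)$ with $\gamma\tan\gamma=-m\tanh m$. Then there exists $m^*\in(0,+\infty)$ such that $\lambda_{1,m^*}=\min_{m>0}\lambda_{1,m}$.
   Context: This concerns the rectangle case $\ell=1$: for integer $m\ge1$, $\lambda_{1,m}$ is an eigenvalue of $\Delta^2u=-\lambda\Delta u$ on $(0,\pi)\times(-1,1)$ with $u=0$ on the boundary, $u_y=0$ on $y=\pm1$, $u_{xx}=0$ on $x\in\{0,\pi\}$; here $m$ ranges over all positive reals. *)

(* Defs.v *)
From Stdlib Require Import Reals ClassicalEpsilon.
Open Scope R_scope.

Definition is_gamma1 (m g : R) : Prop :=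
  PI / 2 < g < PI /\ g * tan g = - (m * tanh m).

Definition gamma1 (m : R) : R :=
  epsilon (inhabits 0) (fun g => is_gamma1 m g).

Definition lambda1 (m : R) : R := m ^ 2 + gamma1 m ^ 2.

(* Main.v *)
Require Import Defs.
From Stdlib Require Import Reals.
From Stdlib Require Import Lra ClassicalEpsilon.
Open Scope R_scope.

Lemma PI_bnd : 3.14 < PI /\ PI < 3.1416.
Proof. pose proof (PI_2_3_7_ineq 1) as H. pose proof (PI_2_3_7_ineq 2) as H2. simpl in H, H2. unfold tg_alt, PI_2_3_7_tg, Ratan_seq in H, H2. simpl in H, H2. split; lra. Qed.

Lemma cos_mid z : PI/2 < z -> z <= PI -> cos z < 0.
Proof. intros; apply cos_lt_0; lra. Qed.

Lemma tan_shift z : cos z <> 0 -> tan z = tan (z - PI).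
Proof. intros Hc. unfold tan. rewrite sin_minus, cos_minus, sin_PI, cos_PI.
  replace (cos z * -1 + sin z * 0) with (- cos z) by ring.
  replace (sin z * -1 - cos z * 0) with (- sin z) by ring.
  field; auto. Qed.

Lemma tan_neg_mid z : PI/2 < z -> z < PI -> tan z < 0.
Proof. intros. rewrite tan_shift by (pose proof (cos_mid z); lra).
  apply tan_lt_0; lra. Qed.

Definition fg (g : R) := g * tan g.
Definition fg' (g : R) := tan g + g * (1 / (cos g)²).

Lemma fg_deriv c : cos c <> 0 -> derivable_pt_lim fg c (fg' c).
Proof. intros Hc.
  assert (Ht : derivable_pt_lim tan c (1 / (cos c)²)).
  { replace (1 / (cos c)²) with ((cos c * cos c - (- sin c) * sin c) / (cos c)²).
    2:{ unfold Rsqr. field_simplify; auto. rewrite <- (sin2_cos2 c). unfold Rsqr. field. auto. }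
    change tan with (sin / cos)%F.
    apply derivable_pt_lim_div; auto.
    apply derivable_pt_lim_sin. apply derivable_pt_lim_cos. }
  unfold fg, fg'.
  replace (tan c + c * (1 / (cos c)²)) with (1 * tan c + c * (1 / (cos c)²)) by ring.
  change (fun g => g * tan g) with (id * tan)%F.
  apply derivable_pt_lim_mult; auto. apply derivable_pt_lim_id.
Qed.

Lemma fg_inc x y : PI/2 < x -> x < y -> y <= PI -> fg x < fg y.
Proof. intros H1 H2 H3.
  destruct (MVT_cor2 fg fg' x y H2) as [c [Hc1 Hc2]].
  { intros c Hc. apply fg_deriv. pose proof (cos_mid c). lra. }
  assert (0 < fg' c).
  { pose proof (cos_mid c) as Hc. assert (PI/2 < c <= PI) by lra. specialize (Hc ltac:(lra) ltac:(lra)).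
    unfold fg', tan.
    assert (E : sin c / cos c + c * (1 / (cos c)²) = (sin c * cos c + c) / (cos c)²).
    { unfold Rsqr; field; lra. }
    rewrite E. apply Rdiv_lt_0_compat. 2:{ unfold Rsqr; nra. }
    pose proof (SIN_bound c). pose proof (COS_bound c). pose proof PI2_1. nra. }
  nra.
Qed.

Lemma fg_le x y : PI/2 < x -> x <= y -> y <= PI -> fg x <= fg y.
Proof. intros. destruct (Req_dec x y). subst; lra. left; apply fg_inc; lra. Qed.

Lemma fg_cont z : PI/2 < z -> z <= PI -> continuity_pt fg z.
Proof. intros. apply derivable_continuous_pt. exists (fg' z). apply fg_deriv.
  pose proof (cos_mid z); lra. Qed.

Lemma fg_low c : 0 < c -> exists a, PI/2 < a < PI /\ fg a < - c.
Proof. intros Hc. set (t := / (c + 2)).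
  assert (Ht : 0 < t <= 1/2). { unfold t. split. apply Rinv_0_lt_compat; lra.
    apply Rmult_le_reg_l with (c+2). lra. rewrite Rinv_r by lra. lra. }
  assert (Htc : t * (c + 2) = 1). { unfold t. field. lra. }
  pose proof PI_bnd.
  exists (PI/2 + t). split. lra.
  unfold fg, tan. rewrite sin_plus, cos_plus, sin_PI2, cos_PI2.
  replace (1 * cos t + 0 * sin t) with (cos t) by ring.
  replace (0 * cos t - 1 * sin t) with (- sin t) by ring.
  assert (Hs : 0 < sin t) by (apply sin_gt_0; lra).
  pose proof (pre_sin_bound t 0 ltac:(lra) ltac:(lra)) as S.
  pose proof (pre_cos_bound t 0 ltac:(lra) ltac:(lra)) as C.
  unfold sin_approx, cos_approx, sin_term, cos_term in S, C. simpl in S, C.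
  assert (Hst : sin t <= t). { nra. }
  assert (Hct : 7/8 <= cos t). { nra. }
  assert (E : (PI / 2 + t) * (cos t / - sin t) = - ((PI/2 + t) * cos t / sin t)).
  { field. lra. }
  rewrite E. apply Ropp_lt_contravar.
  apply Rmult_lt_reg_r with (sin t); auto.
  replace ((PI / 2 + t) * cos t / sin t * sin t) with ((PI / 2 + t) * cos t) by (field; lra).
  nra.
Qed.

Lemma fg_root c : 0 < c -> exists g, PI/2 < g < PI /\ fg g = - c.
Proof. intros Hc. destruct (fg_low c Hc) as [a [Ha Hfa]].
  set (phi := fun z => (a + PI)/2 + (PI - a)/2 * sin z).
  set (F := fun z => fg (phi z) + c).
  assert (Hphi : forall z, a <= phi z <= PI).
  { intro z; unfold phi; pose proof (SIN_bound z). split; nra. }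
  assert (HF : continuity F).
  { intro z. unfold F. apply continuity_pt_plus.
    2:{ apply continuity_pt_const. intros x y; reflexivity. }
    change (fun z0 => fg (phi z0)) with (comp fg phi).
    apply continuity_pt_comp.
    - unfold phi. apply continuity_pt_plus. apply continuity_pt_const. intros x y; reflexivity.
      apply continuity_pt_scal. apply continuity_sin.
    - apply fg_cont; specialize (Hphi z); lra. }
  pose proof PI2_RGT_0.
  destruct (IVT F (-(PI/2)) (PI/2) HF ltac:(lra)) as [z [Hz Fz]].
  - unfold F, phi. cbv beta. rewrite sin_neg, sin_PI2.
    replace ((a + PI) / 2 + (PI - a) / 2 * - (1)) with a by field. lra.
  - unfold F, phi. cbv beta. rewrite sin_PI2.
    replace ((a + PI) / 2 + (PI - a) / 2 * 1) with PI by field.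
    unfold fg. rewrite tan_PI. lra.
  - exists (phi z). unfold F in Fz. specialize (Hphi z).
    assert (phi z <> PI). { intro E. rewrite E in Fz. unfold fg in Fz. rewrite tan_PI in Fz. lra. }
    split. lra. lra.
Qed.

Lemma tanh_pos m : 0 < m -> 0 < tanh m < 1.
Proof. intros Hm. unfold tanh, sinh, cosh.
  pose proof (exp_pos m). pose proof (exp_pos (-m)).
  assert (exp (-m) < exp m) by (apply exp_increasing; lra).
  split. apply Rdiv_lt_0_compat; lra.
  apply Rmult_lt_reg_r with ((exp m + exp (- m)) / 2). lra.
  replace ((exp m - exp (- m)) / 2 / ((exp m + exp (- m)) / 2) * ((exp m + exp (- m)) / 2)) with ((exp m - exp (- m)) / 2) by (field; lra).
  lra.
Qed.

Definition hh (m : R) := m * tanh m.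

Lemma hh_bnd m : 0 < m -> 0 < hh m < m.
Proof. intros. pose proof (tanh_pos m H). unfold hh. split; nra. Qed.

Lemma gamma1_spec m : 0 < m -> PI/2 < gamma1 m < PI /\ fg (gamma1 m) = - hh m.
Proof. intros Hm. unfold gamma1.
  apply (epsilon_spec (inhabits 0) (fun g => is_gamma1 m g)).
  destruct (fg_root (hh m)) as [g Hg]. apply hh_bnd; auto. exists g. exact Hg.
Qed.

Lemma hh_cont m : continuity_pt hh m.
Proof.
  assert (Hx : forall x, continuity_pt exp x).
  { intro x. apply derivable_continuous_pt. exists (exp x). apply derivable_pt_lim_exp. }
  assert (Hn : forall x, continuity_pt (fun y => exp (- y)) x).
  { intro x. change (fun y => exp (- y)) with (comp exp (fun y => - y)).
    apply continuity_pt_comp. apply continuity_pt_opp. apply derivable_continuous_pt, derivable_pt_id. apply Hx. }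
  set (E := fun y => exp (- y)).
  unfold hh, tanh, sinh, cosh.
  change (fun x => x * ((exp x - exp (- x)) / 2 / ((exp x + exp (- x)) / 2))) with
    (id * ((mult_fct (minus_fct exp E) (fct_cte (/2))) / (mult_fct (plus_fct exp E) (fct_cte (/2)))))%F.
  apply continuity_pt_mult. apply derivable_continuous_pt, derivable_pt_id.
  apply continuity_pt_div.
  - apply continuity_pt_mult. apply continuity_pt_minus; auto. apply continuity_pt_const. intros x y; reflexivity.
  - apply continuity_pt_mult. apply continuity_pt_plus; auto. apply continuity_pt_const. intros x y; reflexivity.
  - unfold mult_fct, plus_fct, fct_cte, E. pose proof (exp_pos m). pose proof (exp_pos (-m)). lra.
Qed.

Lemma gamma1_cont c : 0 < c -> continuity_pt gamma1 c.
Proof. intros Hc.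
  pose proof (hh_cont c) as HH.
  unfold continuity_pt, continue_in, limit1_in, limit_in in *. simpl in *. unfold R_dist in *.
  intros eps Heps.
  destruct (gamma1_spec c Hc) as [[G1 G2] FG].
  set (G := gamma1 c) in *.
  set (e := Rmin (eps/2) (Rmin ((G-PI/2)/2) ((PI-G)/2))).
  assert (He : 0 < e /\ e <= eps/2 /\ e <= (G-PI/2)/2 /\ e <= (PI-G)/2).
  { unfold e. repeat split.
    - repeat apply Rmin_pos; lra.
    - apply Rmin_l.
    - eapply Rle_trans. apply Rmin_r. apply Rmin_l.
    - eapply Rle_trans. apply Rmin_r. apply Rmin_r. }
  assert (Flo : fg (G - e) < fg G) by (apply fg_inc; lra).
  assert (Fhi : fg G < fg (G + e)) by (apply fg_inc; lra).
  set (eta := Rmin (fg G - fg (G - e)) (fg (G + e) - fg G)).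
  assert (Heta : 0 < eta /\ eta <= fg G - fg (G - e) /\ eta <= fg (G + e) - fg G).
  { unfold eta. repeat split. apply Rmin_pos; lra. apply Rmin_l. apply Rmin_r. }
  destruct (HH eta ltac:(lra)) as [alp [Halp Hal]].
  exists (Rmin alp (c/2)). split. apply Rmin_pos; lra.
  intros x [Dx Hx].
  assert (Hx1 : Rabs (x - c) < alp) by (eapply Rlt_le_trans; [exact Hx| apply Rmin_l]).
  assert (Hx2 : Rabs (x - c) < c/2) by (eapply Rlt_le_trans; [exact Hx| apply Rmin_r]).
  assert (Hxp : 0 < x). { apply Rabs_def2 in Hx2. lra. }
  specialize (Hal x (conj Dx Hx1)). apply Rabs_def2 in Hal.
  destruct (gamma1_spec x Hxp) as [[X1 X2] FX].
  apply Rabs_def1.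
  - destruct (Rlt_or_le (gamma1 x - G) e) as [Hl|Hl]. lra.
    exfalso. assert (fg (G + e) <= fg (gamma1 x)) by (apply fg_le; lra). lra.
  - destruct (Rlt_or_le (- e) (gamma1 x - G)) as [Hl|Hl]. lra.
    exfalso. assert (fg (gamma1 x) <= fg (G - e)) by (apply fg_le; lra). lra.
Qed.

Lemma lambda1_cont c : 0 < c -> continuity_pt lambda1 c.
Proof. intros Hc. unfold lambda1.
  change (fun m => m ^ 2 + gamma1 m ^ 2) with
    (plus_fct (mult_fct id (mult_fct id (fct_cte 1))) (mult_fct gamma1 (mult_fct gamma1 (fct_cte 1)))).
  assert (Hi : continuity_pt id c) by (apply derivable_continuous_pt, derivable_pt_id).
  assert (H1 : continuity_pt (fct_cte 1) c) by (apply continuity_pt_const; intros x y; reflexivity).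
  pose proof (gamma1_cont c Hc).
  apply continuity_pt_plus; repeat apply continuity_pt_mult; auto.
Qed.

Lemma sqrt3_bnd : 1.732 < sqrt 3.
Proof. pose proof (sqrt_sqrt 3 ltac:(lra)). pose proof (sqrt_pos 3). nra. Qed.

Lemma exp17 : 4.32 < exp 1.7.
Proof. replace 1.7 with (0.34 + 0.34 + 0.34 + 0.34 + 0.34) by lra.
  rewrite !exp_plus. pose proof (exp_ineq1 0.34 ltac:(lra)). set (e := exp 0.34) in *.
  assert (e*e > 1.34*1.34) by nra. assert (e*e*e > 1.34*1.34*1.34) by nra.
  assert (e*e*e*e > 1.34*1.34*1.34*1.34) by nra. assert (e*e*e*e*e > 1.34*1.34*1.34*1.34*1.34) by nra.
  lra. Qed.

Lemma hh17 : 5 * PI / 6 * (1 / sqrt 3) < hh 1.7.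
Proof. pose proof sqrt3_bnd. pose proof exp17. pose proof PI_bnd.
  unfold hh, tanh, sinh, cosh. rewrite exp_Ropp. set (A := exp 1.7) in *.
  replace (1.7 * ((A - / A) / 2 / ((A + / A) / 2))) with (1.7 * (A*A - 1) / (A*A + 1)).
  2:{ field. split; nra. }
  apply Rlt_le_trans with 1.512.
  - replace (5 * PI / 6 * (1 / sqrt 3)) with (5 * PI / (6 * sqrt 3)) by (field; lra).
    apply Rmult_lt_reg_r with (6 * sqrt 3). lra.
    replace (5 * PI / (6 * sqrt 3) * (6 * sqrt 3)) with (5 * PI) by (field; lra). lra.
  - apply Rmult_le_reg_r with (A*A+1). nra.
    replace (1.7 * (A * A - 1) / (A * A + 1) * (A * A + 1)) with (1.7 * (A * A - 1)) by (field; nra).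
    nra.
Qed.

Lemma gamma17 : gamma1 1.7 < 5 * PI / 6.
Proof. destruct (gamma1_spec 1.7 ltac:(lra)) as [[G1 G2] FG].
  pose proof PI_bnd. pose proof hh17.
  assert (T : tan (5 * PI / 6) = - (1 / sqrt 3)).
  { rewrite tan_shift. replace (5 * PI / 6 - PI) with (- (PI/6)) by field.
    rewrite tan_neg, tan_PI6. reflexivity. pose proof (cos_mid (5*PI/6)). lra. }
  destruct (Rlt_or_le (gamma1 1.7) (5 * PI / 6)) as [h|h]; auto.
  exfalso. assert (fg (5*PI/6) <= fg (gamma1 1.7)) by (apply fg_le; lra).
  unfold fg at 1 in H1. rewrite T in H1. lra.
Qed.

Theorem theorem5p3 :
  exists mstar : R, 0 < mstar /\
    forall m : R, 0 < m -> lambda1 mstar <= lambda1 m.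
Proof.
  pose proof PI_bnd.
  assert (L17 : lambda1 1.7 < 1.7^2 + (5*PI/6)^2).
  { unfold lambda1. pose proof gamma17. destruct (gamma1_spec 1.7 ltac:(lra)) as [[G1 G2] _]. nra. }
  assert (F313 : fg 3.13 < 0). { unfold fg. pose proof (tan_neg_mid 3.13 ltac:(lra) ltac:(lra)). nra. }
  set (a := Rmin 1 (- fg 3.13)).
  assert (Ha : 0 < a <= 1 /\ a <= - fg 3.13).
  { unfold a. repeat split. apply Rmin_pos; lra. apply Rmin_l. apply Rmin_r. }
  destruct (continuity_ab_min lambda1 a PI ltac:(lra)) as [ms [Hms Hms2]].
  { intros c Hc. apply lambda1_cont. lra. }
  exists ms. split. lra.
  intros m Hm.
  destruct (Rlt_or_le m a) as [h1|h1].
  -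
    destruct (gamma1_spec m Hm) as [[G1 G2] FG].
    pose proof (hh_bnd m Hm).
    assert (3.13 < gamma1 m).
    { destruct (Rlt_or_le 3.13 (gamma1 m)) as [h|h]; auto.
      exfalso. assert (fg (gamma1 m) <= fg 3.13) by (apply fg_le; lra). lra. }
    assert (lambda1 ms <= lambda1 1.7) by (apply Hms; lra).
    unfold lambda1 at 2. nra.
  - destruct (Rle_or_lt m PI) as [h2|h2].
    + apply Hms; lra.
    + assert (lambda1 ms <= lambda1 1.7) by (apply Hms; lra).
      unfold lambda1 at 2. assert (0 <= gamma1 m ^ 2) by (apply pow2_ge_0). nra.
Qed.
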